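(* In $TTR$, let $T^-\in\Omega^-$ and $T^+\in\Omega^+$. (1) If $T^-\subseteq A$, then $A\in\Omega^-$ and $Fv_2(A)\subseteq Fv_2(T^-)$. (2) If $B\subseteq T^+$, then $B\in\Omega^+$ and $Fv_2(B)\subseteq Fv_2(T^+)$.
   Context: $TTR$ types: over a second-order language with first-order variables, function symbols, $n$-ary predicate variables and symbols, and a fixed system $\mathbf E$ of equations; atomic formulas $\perp$ and $X(t_1,\dots,t_n)$; constructors $\to$, $\forall x$, $\forall X$, and $\mu Cx_1\dots x_nA\langle t_1,\dots,t_n\rangle$ for $C$ an $n$-ary predicate symbol occurring and positive in $A$ ($C,\bar x$ bound). Positivity: $X$ is positive and negative in $A$ if it does not occur; positive not negative in $X(\bar t)$; polarity flips on the left of $\to$ and is unchanged on the right, under $\forall v$ ($v\ne X$) and under $\mu$. Subtyping $\subseteq$ is generated by: reflexivity; $A\subseteq A',B\subseteq B'\Rightarrow A'\to B\subseteq A\to B'$; $A[G/v]\subseteq B\Rightarrow\forall vA\subseteq B$; $A\subseteq B\Rightarrow A\subseteq\forall vB$ ($v$ not free in $A$); $A\subseteq B[v/y]\Rightarrow A\subseteq B[w/y]$ for $v=w$ an instance of an equation of $\mathbf E$; transitivity; $D[\mu C\bar xD\langle\bar z\rangle/C(\bar z)][\bar t/\bar x]\subseteq\mu C\bar xD\langle\bar t\rangle$ and its converse; $D[E/C(\bar x)]\subseteq E\Rightarrow\mu C\bar xD\langle\bar t\rangle\subseteq E[\bar t/\bar x]$. $\forall$-positive types $\Omega^+$ and $\forall$-negative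 types $\Omega^-$: atomic types are in both; if $T^+\in\Omega^+$, $T^-\in\Omega^-$ then $T^-\to T^+\in\Omega^+$ and $T^+\to T^-\in\Omega^-$; if $T^+\in\Omega^+$ then $\forall xT^+\in\Omega^+$ and $\forall XT^+\in\Omega^+$; if $T^-\in\Omega^-$ then $\forall xT^-\in\Omega^-$, and $\forall XT^-\in\Omega^-$ provided $X$ is not free in $T^-$; if $T^+\in\Omega^+$ and $C$ is an $n$-ary predicate symbol occurring and positive in $T^+$, then $\mu Cx_1\dots x_nT^+\langle t_1,\dots,t_n\rangle\in\Omega^+$. $Fv_2(T)$ is the set of free predicate variables and free predicate symbols of $T$ (with $\perp$ counted as a 0-ary predicate symbol). *)

(* Defs.v *)
From Stdlib Require Import List Arith PeanoNat Bool.
Import ListNotations.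

Inductive term : Type :=
| TV (n : nat)
| TF (f : nat) (args : list term).

Fixpoint tsubst (s : nat -> term) (t : term) : term :=
  match t with
  | TV n => s n
  | TF f args => TF f (map (tsubst s) args)
  end.

(** Heads of atomic formulas X(t1,...,tn): predicate variables (de Bruijn
    indices; also used for the predicate symbols bound by mu) and free
    predicate symbols (constants). *)
Inductive phead : Type :=
| HVar (i : nat)
| HSym (c : nat).

(** Types.
    - [TAllF A]   : forall x A            (binds first-order index 0)
    - [TAllP n A] : forall X A, X n-ary   (binds predicate index 0)
    - [TMu A ts]  : mu C x1..xn A <t1..tn>, n = length ts; in [A] the
                    predicate index 0 is C and the first-order indices
                    0..n-1 are x1..xn; [ts] lives in the outer scope. *)
Inductive ty : Type :=
| TBot
| TAtom (h : phead) (args : list term)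
| TArr (A B : ty)
| TAllF (A : ty)
| TAllP (n : nat) (A : ty)
| TMu (A : ty) (args : list term).

Definition shiftT : nat -> term := fun n => TV (S n).
Definition upF (s : nat -> term) : nat -> term :=
  fun n => match n with 0 => TV 0 | S m => tsubst shiftT (s m) end.
Fixpoint upFn (k : nat) (s : nat -> term) : nat -> term :=
  match k with 0 => s | S k => upF (upFn k s) end.

Fixpoint fsub (s : nat -> term) (A : ty) : ty :=
  match A with
  | TBot => TBot
  | TAtom h ts => TAtom h (map (tsubst s) ts)
  | TArr A B => TArr (fsub s A) (fsub s B)
  | TAllF A => TAllF (fsub (upF s) A)
  | TAllP n A => TAllP n (fsub s A)
  | TMu A ts => TMu (fsub (upFn (length ts) s) A) (map (tsubst s) ts)
  end.

Definition instk (k : nat) (ts : list term) : nat -> term :=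
  fun j => if j <? k then nth j ts (TV 0) else TV (j - k).

Definition liftFc (c d : nat) : nat -> term :=
  fun j => if j <? c then TV j else TV (j + d).

Definition hren (r : nat -> nat) (h : phead) : phead :=
  match h with HVar i => HVar (r i) | HSym c => HSym c end.
Definition upR (r : nat -> nat) (n : nat) : nat :=
  match n with 0 => 0 | S m => S (r m) end.
Fixpoint pren (r : nat -> nat) (A : ty) : ty :=
  match A with
  | TBot => TBot
  | TAtom h ts => TAtom (hren r h) ts
  | TArr A B => TArr (pren r A) (pren r B)
  | TAllF A => TAllF (pren r A)
  | TAllP n A => TAllP n (pren (upR r) A)
  | TMu A ts => TMu (pren (upR r) A) ts
  end.

(** Second-order substitution A[G/X]: replace the predicate index c by the
    abstraction G with k parameters (G's first-order indices 0..k-1 are the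
    parameters, the others refer to the ambient scope; G's predicate indices
    refer to the scope where index c has been removed). *)
Fixpoint psub (c k : nat) (G : ty) (A : ty) : ty :=
  match A with
  | TBot => TBot
  | TAtom (HVar i) ts =>
      if i =? c then fsub (instk k ts) G
      else if c <? i then TAtom (HVar (pred i)) ts
      else TAtom (HVar i) ts
  | TAtom h ts => TAtom h ts
  | TArr A B => TArr (psub c k G A) (psub c k G B)
  | TAllF A => TAllF (psub c k (fsub (liftFc k 1) G) A)
  | TAllP n A => TAllP n (psub (S c) k (pren S G) A)
  | TMu A ts => TMu (psub (S c) k (pren S (fsub (liftFc k (length ts)) G)) A) ts
  end.

Fixpoint occ (c : nat) (A : ty) : bool :=
  match A with
  | TBot => false
  | TAtom (HVar i) _ => i =? c
  | TAtom _ _ => false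
  | TArr A B => occ c A || occ c B
  | TAllF A => occ c A
  | TAllP _ A => occ (S c) A
  | TMu A _ => occ (S c) A
  end.

Fixpoint pos (c : nat) (A : ty) {struct A} : bool :=
  match A with
  | TBot => true
  | TAtom _ _ => true
  | TArr A B => neg c A && pos c B
  | TAllF A => pos c A
  | TAllP _ A => pos (S c) A
  | TMu A _ => pos (S c) A
  end
with neg (c : nat) (A : ty) {struct A} : bool :=
  match A with
  | TBot => true
  | TAtom (HVar i) _ => negb (i =? c)
  | TAtom _ _ => true
  | TArr A B => pos c A && neg c B
  | TAllF A => neg c A
  | TAllP _ A => neg (S c) A
  | TMu A _ => neg (S c) A
  end.

Fixpoint wf (A : ty) : bool :=
  match A with
  | TBot => true
  | TAtom _ _ => true
  | TArr A B => wf A && wf B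
  | TAllF A => wf A
  | TAllP _ A => wf A
  | TMu A _ => occ 0 A && pos 0 A && wf A
  end.

(** One-step unfolding  D[mu C x D<z>/C(z)][ts/x]. *)
Definition unfoldMu (D : ty) (ts : list term) : ty :=
  let n := length ts in
  let G := TMu (fsub (liftFc n (2 * n)) D) (map TV (seq 0 n)) in
  fsub (instk n ts) (psub 0 n G D).

Inductive sub (E : term -> term -> Prop) : ty -> ty -> Prop :=
| S_refl A : wf A = true -> sub E A A
| S_arr A A' B B' : sub E A A' -> sub E B B' -> sub E (TArr A' B) (TArr A B')
| S_allEF A t B : wf A = true ->
    sub E (fsub (instk 1 [t]) A) B -> sub E (TAllF A) B
| S_allEP n A G B : wf A = true -> wf G = true ->
    sub E (psub 0 n G A) B -> sub E (TAllP n A) B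
| S_allIF A B : wf A = true -> sub E (fsub shiftT A) B -> sub E A (TAllF B)
| S_allIP n A B : wf A = true -> sub E (pren S A) B -> sub E A (TAllP n B)
| S_eq A B l r (s : nat -> term) : wf B = true -> E l r ->
    sub E A (fsub (instk 1 [tsubst s l]) B) ->
    sub E A (fsub (instk 1 [tsubst s r]) B)
| S_trans A B C : sub E A B -> sub E B C -> sub E A C
| S_unfold D ts : wf (TMu D ts) = true -> sub E (unfoldMu D ts) (TMu D ts)
| S_fold D ts : wf (TMu D ts) = true -> sub E (TMu D ts) (unfoldMu D ts)
| S_ind D ts E' : wf (TMu D ts) = true -> wf E' = true ->
    sub E (psub 0 (length ts) (fsub (liftFc (length ts) (length ts)) E') D) E' ->
    sub E (TMu D ts) (fsub (instk (length ts) ts) E').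

Inductive OmegaP : ty -> Prop :=
| OP_bot : OmegaP TBot
| OP_atom h ts : OmegaP (TAtom h ts)
| OP_arr A B : OmegaN A -> OmegaP B -> OmegaP (TArr A B)
| OP_allF A : OmegaP A -> OmegaP (TAllF A)
| OP_allP n A : OmegaP A -> OmegaP (TAllP n A)
| OP_mu A ts : OmegaP A -> occ 0 A = true -> pos 0 A = true -> OmegaP (TMu A ts)
with OmegaN : ty -> Prop :=
| ON_bot : OmegaN TBot
| ON_atom h ts : OmegaN (TAtom h ts)
| ON_arr A B : OmegaP A -> OmegaN B -> OmegaN (TArr A B)
| ON_allF A : OmegaN A -> OmegaN (TAllF A)
| ON_allP n A : OmegaN A -> occ 0 A = false -> OmegaN (TAllP n A).

Inductive pname : Type :=
| PV (i : nat)
| PS (c : nat)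
| PBot.

Fixpoint fv2 (d : nat) (A : ty) (p : pname) : Prop :=
  match A with
  | TBot => p = PBot
  | TAtom (HVar i) _ => d <= i /\ p = PV (i - d)
  | TAtom (HSym c) _ => p = PS c
  | TArr A B => fv2 d A p \/ fv2 d B p
  | TAllF A => fv2 d A p
  | TAllP _ A => fv2 (S d) A p
  | TMu A _ => fv2 (S d) A p
  end.

Definition Fv2 (A : ty) (p : pname) : Prop := fv2 0 A p.

(* Main.v *)
Require Import Defs.
From Stdlib Require Import List Arith PeanoNat Bool Lia.
Import ListNotations.

Lemma F1 : forall A s c, occ c (fsub s A) = occ c A.
Proof. induction A; intros; simpl; try destruct h; auto; congruence. Qed.

Lemma F2 : forall A s c, pos c (fsub s A) = pos c A /\ neg c (fsub s A) = neg c A.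
Proof. induction A; intros; simpl; try destruct h; auto.
  destruct (IHA1 s c), (IHA2 s c). rewrite H, H0, H1, H2; auto. Qed.

Lemma F3 : forall A s d p, fv2 d (fsub s A) p <-> fv2 d A p.
Proof. induction A; intros; simpl; try destruct h; try tauto.
  - rewrite IHA1, IHA2; tauto.
  - apply IHA.
  - apply IHA.
  - apply IHA.
Qed.

Lemma F4 : forall A s, (OmegaP (fsub s A) <-> OmegaP A) /\ (OmegaN (fsub s A) <-> OmegaN A).
Proof. induction A; intros; simpl.
- split; split; intro; constructor.
- split; split; intro; constructor.
- destruct (IHA1 s) as [a b], (IHA2 s) as [c d].
  split; split; intro H; inversion H; subst; constructor; tauto.
- destruct (IHA (upF s)) as [a b].
  split; split; intro H; inversion H; subst; constructor; tauto.
- destruct (IHA s) as [a b].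
  split; split; intro H; inversion H; subst; constructor; try tauto; rewrite ?F1 in *; auto.
- destruct (IHA (upFn (length args) s)) as [a b].
  split; split; intro H; inversion H; subst; try constructor; try tauto;
   try rewrite F1 in *; try (destruct (F2 A (upFn (length args) s) 0); congruence); auto.
Qed.

Definition inj (r : nat -> nat) := forall a b, r a = r b -> a = b.
Lemma upR_inj r : inj r -> inj (upR r).
Proof. intros H [|a] [|b]; simpl; intro E; try discriminate; auto; injection E; intro; f_equal; auto. Qed.

Lemma R1' : forall A r j, inj r -> occ (r j) (pren r A) = occ j A.
Proof. induction A; intros; simpl; try destruct h; simpl; auto.
- destruct (Nat.eqb_spec (r i) (r j)), (Nat.eqb_spec i j); subst; auto. apply H in e; contradiction.
- rewrite IHA1, IHA2; auto.
- apply (IHA (upR r) (S j)); apply upR_inj; auto.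
- apply (IHA (upR r) (S j)); apply upR_inj; auto.
Qed.

Lemma R1 : forall A r j, (forall i, r i <> j) -> occ j (pren r A) = false.
Proof. induction A; intros; simpl; try destruct h; simpl; auto.
- apply Nat.eqb_neq; auto.
- rewrite IHA1, IHA2; auto.
- apply IHA. intros [|i]; simpl; auto; intro E; injection E; apply H.
- apply IHA. intros [|i]; simpl; auto; intro E; injection E; apply H.
Qed.

Lemma Rpos : forall A r j, inj r -> pos (r j) (pren r A) = pos j A /\ neg (r j) (pren r A) = neg j A.
Proof. induction A; intros; simpl; try destruct h; simpl; auto.
- split; auto. destruct (Nat.eqb_spec (r i) (r j)) as [E1|E1], (Nat.eqb_spec i j) as [E2|E2]; auto;
  try (apply H in E1; contradiction); subst; contradiction.
- destruct (IHA1 r j H), (IHA2 r j H). rewrite H0, H1, H2, H3; auto.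
- apply (IHA (upR r) (S j)); apply upR_inj; auto.
- apply (IHA (upR r) (S j)); apply upR_inj; auto.
Qed.

Lemma R3 : forall A r, inj r -> (OmegaP (pren r A) <-> OmegaP A) /\ (OmegaN (pren r A) <-> OmegaN A).
Proof. induction A; intros; simpl.
- split; split; intro; constructor.
- split; split; intro; constructor.
- destruct (IHA1 r H) as [a b], (IHA2 r H) as [c d].
  split; split; intro H0; inversion H0; subst; constructor; tauto.
- destruct (IHA r H) as [a b].
  split; split; intro H0; inversion H0; subst; constructor; tauto.
- assert (Hu := upR_inj r H). destruct (IHA _ Hu) as [a b].
  assert (E := R1' A (upR r) 0 Hu). simpl in E.
  split; split; intro H0; inversion H0; subst; constructor; try tauto; congruence.
- assert (Hu := upR_inj r H). destruct (IHA _ Hu) as [a b].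
  assert (E := R1' A (upR r) 0 Hu). simpl in E.
  destruct (Rpos A (upR r) 0 Hu) as [P _]. simpl in P.
  split; split; intro H0; inversion H0; subst; try constructor; try tauto; congruence.
Qed.

Definition upp (p : pname) : pname := match p with PV i => PV (S i) | q => q end.

Lemma U : forall A d p, fv2 d A (upp p) <-> fv2 (S d) A p.
Proof. induction A; intros; simpl; try destruct h; try (rewrite ?IHA1, ?IHA2, ?IHA; tauto).
- destruct p; simpl; split; intro; try discriminate; auto.
- destruct p; simpl; split; intros [H1 H2]; try discriminate.
  + injection H2; intro; split; [lia | f_equal; lia].
  + injection H2; intro; split; [lia | f_equal; lia].
- destruct p; simpl; split; intro; try discriminate; auto.
Qed.

Lemma O : forall A d i, fv2 d A (PV i) <-> occ (i + d) A = true.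
Proof. induction A; intros; simpl; try destruct h; try (rewrite ?IHA1, ?IHA2; rewrite orb_true_iff; tauto).
- split; intro; discriminate.
- rewrite Nat.eqb_eq. split; [intros [H1 H2]; injection H2; lia | intro; split; [lia| f_equal; lia]].
- split; intro; discriminate.
- apply IHA.
- rewrite IHA, Nat.add_succ_r; tauto.
- rewrite IHA, Nat.add_succ_r; tauto.
Qed.

Lemma R2 : forall A r m d p, (forall j, j < m -> r j = j) -> (forall j, m <= j -> r j = S j) -> m <= d ->
  (fv2 (S d) (pren r A) p <-> fv2 d A p).
Proof. induction A; intros; simpl; try destruct h; simpl.
- tauto.
- destruct (Nat.lt_ge_cases i m).
  + rewrite H; auto. split; intros [? ?]; lia.
  + rewrite H0; auto. split; intros [? ?]; subst; split; try lia; f_equal; lia.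
- tauto.
- rewrite (IHA1 r m), (IHA2 r m); auto; tauto.
- apply (IHA r m); auto.
- apply (IHA (upR r) (S m)); try lia.
  + intros [|j] Hj; simpl; auto. rewrite H; auto; lia.
  + intros [|j] Hj; simpl; try lia. rewrite H0; auto; lia.
- apply (IHA (upR r) (S m)); try lia.
  + intros [|j] Hj; simpl; auto. rewrite H; auto; lia.
  + intros [|j] Hj; simpl; try lia. rewrite H0; auto; lia.
Qed.

Lemma R2b : forall A r d p, (forall j, j < d -> r j = j) -> (forall j, d <= j -> r j = S j) ->
  (fv2 d A p -> fv2 d (pren r A) (upp p)).
Proof. induction A; intros; simpl in *; try destruct h; simpl in *; auto.
- subst; auto.
- destruct H1; subst; simpl. rewrite H0; auto. split; [lia | f_equal; lia].
- subst; auto.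
- destruct H1; [left; eapply IHA1 | right; eapply IHA2]; eauto.
- apply (IHA (upR r) (S d)); auto.
  + intros [|j] Hj; simpl; auto. rewrite H; auto; lia.
  + intros [|j] Hj; simpl; try lia. rewrite H0; auto; lia.
- apply (IHA (upR r) (S d)); auto.
  + intros [|j] Hj; simpl; auto. rewrite H; auto; lia.
  + intros [|j] Hj; simpl; try lia. rewrite H0; auto; lia.
Qed.

Lemma N0 : forall A j, occ j A = false -> pos j A = true /\ neg j A = true.
Proof. induction A; intros; simpl in *; try destruct h; simpl in *; auto.
- rewrite H; auto.
- apply orb_false_iff in H as [H1 H2]. destruct (IHA1 j H1), (IHA2 j H2). rewrite H, H0, H3, H4; auto.
Qed.

Ltac atomcase i c := simpl; destruct (Nat.eqb_spec i c); [subst| destruct (Nat.ltb_spec c i)]; simpl.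

Lemma P1 : forall A c k G j, j < c -> occ j A = true -> occ j (psub c k G A) = true.
Proof. induction A; intros c k G j Hj H; simpl in H.
- discriminate.
- destruct h; [|discriminate]. apply Nat.eqb_eq in H; subst. atomcase j c; try lia.
  apply Nat.eqb_refl.
- simpl. apply orb_true_iff in H as [H|H]; apply orb_true_iff; [left|right]; eauto.
- simpl; eauto.
- simpl. apply IHA; auto; lia.
- simpl. apply IHA; auto; lia.
Qed.

Lemma P2 : forall A c k G j, j < c -> occ j G = false -> occ j A = false -> occ j (psub c k G A) = false.
Proof. induction A; intros c k G j Hj HG H; simpl in H.
- reflexivity.
- destruct h; [|reflexivity]. atomcase i c.
  + rewrite F1; auto.
  + apply Nat.eqb_neq; lia.
  + auto.
- simpl. apply orb_false_iff in H as [H1 H2]; rewrite IHA1, IHA2; auto.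
- simpl; apply IHA; auto; rewrite F1; auto.
- simpl. apply IHA; auto; try lia. rewrite (R1' G S j); auto. intros a b E; injection E; auto.
- simpl. apply IHA; auto; try lia. rewrite (R1' _ S j), F1; auto. intros a b E; injection E; auto.
Qed.

Lemma Sinj : inj S.
Proof. intros a b E; injection E; auto. Qed.

Lemma P3 : forall A c k G j, j < c -> occ j G = false ->
  (pos j A = true -> pos j (psub c k G A) = true) /\ (neg j A = true -> neg j (psub c k G A) = true).
Proof. induction A; intros c k G j Hj HG; simpl.
- auto.
- destruct h; [|auto]. atomcase i c.
  + destruct (F2 G (instk k args) j) as [E1 E2]. rewrite E1, E2. apply N0 in HG as [? ?]; auto.
  + split; auto. intros _. apply negb_true_iff, Nat.eqb_neq; lia.
  + auto.
- destruct (IHA1 c k G j Hj HG), (IHA2 c k G j Hj HG).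
  split; intro H3; apply andb_true_iff in H3 as [? ?]; apply andb_true_iff; auto.
- apply IHA; auto; rewrite F1; auto.
- apply IHA; try lia. rewrite (R1' G S j); auto using Sinj.
- apply IHA; try lia. rewrite (R1' _ S j), F1; auto using Sinj.
Qed.

Lemma R0 : forall G, occ 0 (pren S G) = false.
Proof. intros; apply R1; intros i; discriminate. Qed.

Lemma P4 : forall A c k G, (occ c A = true -> OmegaP G) ->
  (OmegaP A -> pos c A = true -> OmegaP (psub c k G A)) /\
  (OmegaN A -> neg c A = true -> OmegaN (psub c k G A)).
Proof. induction A; intros c k G HG; simpl in *.
- split; intros; constructor.
- destruct h; [|split; intros; constructor]. atomcase i c.
  + split; intros.
    * apply F4; auto.
    * discriminate.
  + split; intros; constructor.
  + split; intros; constructor.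
- assert (H1 : occ c A1 = true -> OmegaP G) by (intro X; apply HG; rewrite X; auto).
  assert (H2 : occ c A2 = true -> OmegaP G) by (intro X; apply HG; rewrite X, orb_true_r; auto).
  destruct (IHA1 c k G H1), (IHA2 c k G H2).
  split; intros HO Hp; apply andb_true_iff in Hp as [? ?]; inversion HO; subst; constructor; auto.
- assert (H1 : occ c A = true -> OmegaP (fsub (liftFc k 1) G)) by (intro X; apply F4; auto).
  destruct (IHA c k _ H1).
  split; intros HO Hp; inversion HO; subst; constructor; auto.
- assert (H1 : occ (S c) A = true -> OmegaP (pren S G)) by (intro X; apply R3; auto using Sinj).
  destruct (IHA (S c) k _ H1).
  split; intros HO Hp; inversion HO; subst; constructor; auto.
  apply P2; auto; try lia. apply R0.
- assert (H1 : occ (S c) A = true -> OmegaP (pren S (fsub (liftFc k (length args)) G)))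
    by (intro X; apply R3; auto using Sinj; apply F4; auto).
  destruct (IHA (S c) k _ H1).
  split; intros HO Hp; inversion HO; subst; constructor; auto.
  + apply P1; auto; lia.
  + apply P3; auto; try lia. apply R0.
Qed.

Lemma P1r : forall A c k G j, j < c -> occ j (psub c k G A) = false -> occ j A = false.
Proof. intros. destruct (occ j A) eqn:E; auto. rewrite (P1 A c k G j) in H0; auto. Qed.

Lemma P5 : forall A c k G, wf A = true ->
  (OmegaP (psub c k G A) -> OmegaP A) /\ (OmegaN (psub c k G A) -> OmegaN A).
Proof. induction A; intros c k G W; simpl in *.
- split; intros; constructor.
- split; intros; constructor.
- apply andb_true_iff in W as [W1 W2].
  destruct (IHA1 c k G W1), (IHA2 c k G W2).
  split; intros HO; inversion HO; subst; constructor; auto.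
- destruct (IHA c k (fsub (liftFc k 1) G) W).
  split; intros HO; inversion HO; subst; constructor; auto.
- destruct (IHA (S c) k (pren S G) W).
  split; intros HO; inversion HO; subst; constructor; auto.
  eapply P1r; [|eauto]; lia.
- apply andb_true_iff in W as [W W3]. apply andb_true_iff in W as [W1 W2].
  destruct (IHA (S c) k (pren S (fsub (liftFc k (length args)) G)) W3).
  split; intros HO; inversion HO; subst; constructor; auto.
Qed.

Lemma P6 : forall A d k G p, fv2 d (psub d k G A) p -> (occ d A = true /\ fv2 d G p) \/ fv2 d A (upp p).
Proof. induction A; intros d k G p H; simpl in *.
- right; subst; auto.
- destruct h.
  + revert H. atomcase i d; intro HH.
    * left. rewrite ?Nat.eqb_refl. split; auto. apply F3 in HH; auto.
    * right. destruct HH as [H1 H2]; subst; simpl. split; [lia|f_equal; lia].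
    * destruct HH; lia.
  + right; simpl in H; subst; auto.
- destruct H as [H|H]; [destruct (IHA1 _ _ _ _ H) as [[? ?]|?] | destruct (IHA2 _ _ _ _ H) as [[? ?]|?]].
  + left; rewrite H0; auto.
  + right; left; auto.
  + left; rewrite H0, orb_true_r; auto.
  + right; right; auto.
- destruct (IHA _ _ _ _ H) as [[? ?]|?]; auto. left; split; auto. apply F3 in H1; auto.
- destruct (IHA _ _ _ _ H) as [[? ?]|?]; auto. left; split; auto.
  apply (proj1 (R2 G S 0 d p ltac:(intros; lia) ltac:(auto) ltac:(lia))) in H1; auto.
- destruct (IHA _ _ _ _ H) as [[? ?]|?]; auto. left; split; auto.
  apply (proj1 (R2 _ S 0 d p ltac:(intros; lia) ltac:(auto) ltac:(lia))) in H1; auto.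
  apply F3 in H1; auto.
Qed.

Lemma P7 : forall A d k G p, fv2 d A (upp p) -> fv2 d (psub d k G A) p.
Proof. induction A; intros d k G p H; simpl in *.
- destruct p; simpl in *; congruence.
- destruct h.
  + destruct H as [H1 H2]. destruct p; simpl in H2; try discriminate. injection H2; intro.
    atomcase i d; try lia. split; [lia|f_equal; lia].
  + destruct p; simpl in *; congruence.
- destruct H; [left|right]; auto.
- auto.
- auto.
- auto.
Qed.
Lemma R2c : forall A r d q, (forall j, j < d -> r j = j) -> (forall j, d <= j -> r j = S j) ->
  fv2 d (pren r A) q -> exists p, q = upp p /\ fv2 d A p.
Proof. induction A; intros r d q H H0 H1; simpl in *.
- exists PBot; auto.
- destruct h; simpl in *.
  + destruct H1 as [H1 H2]. destruct (Nat.lt_ge_cases i d).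
    * rewrite H in H1; auto; lia.
    * rewrite H0 in H1, H2; auto. exists (PV (i - d)); simpl; split; [subst; f_equal; lia | split; auto].
  + exists (PS c); auto.
- destruct H1 as [H1|H1]; [destruct (IHA1 r d q H H0 H1) as [p [? ?]] | destruct (IHA2 r d q H H0 H1) as [p [? ?]]];
    exists p; auto.
- eauto.
- apply (IHA (upR r) (S d)); auto.
  + intros [|j] Hj; simpl; auto. rewrite H; auto; lia.
  + intros [|j] Hj; simpl; try lia. rewrite H0; auto; lia.
- apply (IHA (upR r) (S d)); auto.
  + intros [|j] Hj; simpl; auto. rewrite H; auto; lia.
  + intros [|j] Hj; simpl; try lia. rewrite H0; auto; lia.
Qed.

Lemma upp_inj p q : upp p = upp q -> p = q.
Proof. destruct p, q; simpl; intro E; try discriminate; auto; injection E; intros; subst; auto. Qed.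
Lemma Q : forall A c k G, (OmegaN G -> False) -> occ c A = true ->
  (pos c A = true -> OmegaN (psub c k G A) -> False) /\ (neg c A = true -> OmegaP (psub c k G A) -> False).
Proof. induction A; intros c k G HG Ho; simpl in *.
- discriminate.
- destruct h; [|discriminate]. apply Nat.eqb_eq in Ho; subst.
  rewrite Nat.eqb_refl. split; intros H1 H2.
  + apply F4 in H2; auto.
  + discriminate.
- split; intros H1 H2; inversion H2; subst; apply andb_true_iff in H1 as [Ha Hb];
  apply orb_true_iff in Ho as [Ho|Ho].
  + eapply (proj2 (IHA1 c k G HG Ho)); eauto.
  + eapply (proj1 (IHA2 c k G HG Ho)); eauto.
  + eapply (proj1 (IHA1 c k G HG Ho)); eauto.
  + eapply (proj2 (IHA2 c k G HG Ho)); eauto.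
- assert (HG' : OmegaN (fsub (liftFc k 1) G) -> False) by (intro X; apply F4 in X; auto).
  destruct (IHA c k _ HG' Ho). split; intros H1 H2; inversion H2; subst; eauto.
- assert (HG' : OmegaN (pren S G) -> False) by (intro X; apply R3 in X; auto using Sinj).
  destruct (IHA (S c) k _ HG' Ho). split; intros H1 H2; inversion H2; subst; eauto.
- assert (HG' : OmegaN (pren S (fsub (liftFc k (length args)) G)) -> False)
    by (intro X; apply R3 in X; auto using Sinj; apply F4 in X; auto).
  destruct (IHA (S c) k _ HG' Ho). split; intros H1 H2; inversion H2; subst; eauto.
Qed.

Lemma iP_arr A B : OmegaP (TArr A B) -> OmegaN A /\ OmegaP B.
Proof. intro H; inversion H; auto. Qed.
Lemma iN_arr A B : OmegaN (TArr A B) -> OmegaP A /\ OmegaN B.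
Proof. intro H; inversion H; auto. Qed.
Lemma iP_allF A : OmegaP (TAllF A) -> OmegaP A.
Proof. intro H; inversion H; auto. Qed.
Lemma iN_allF A : OmegaN (TAllF A) -> OmegaN A.
Proof. intro H; inversion H; auto. Qed.
Lemma iP_allP n A : OmegaP (TAllP n A) -> OmegaP A.
Proof. intro H; inversion H; auto. Qed.
Lemma iN_allP n A : OmegaN (TAllP n A) -> OmegaN A /\ occ 0 A = false.
Proof. intro H; inversion H; auto. Qed.
Lemma iP_mu A ts : OmegaP (TMu A ts) -> OmegaP A.
Proof. intro H; inversion H; auto. Qed.
Lemma iN_mu A ts : OmegaN (TMu A ts) -> False.
Proof. intro H; inversion H. Qed.

Lemma M : forall E A B, sub E A B ->
  (OmegaN A -> OmegaN B /\ forall p, Fv2 B p -> Fv2 A p) /\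
  (OmegaP B -> OmegaP A /\ forall p, Fv2 A p -> Fv2 B p).
Proof. intros E A B H; induction H; unfold Fv2 in *.
- split; intros; split; auto.
- destruct IHsub1 as [N1 P1], IHsub2 as [N2 P2].
  split; intro HO.
  + apply iN_arr in HO as [HX HY].
    destruct (P1 HX), (N2 HY). split; [constructor; auto|].
    simpl; intros p [?|?]; auto.
  + apply iP_arr in HO as [HX HY].
    destruct (N1 HX), (P2 HY). split; [constructor; auto|].
    simpl; intros p [?|?]; auto.
-
  destruct IHsub as [N P]. split; intro HO.
  + apply iN_allF in HO. destruct N as [HB HF].
    * apply F4; auto.
    * split; auto. intros p Hp. apply HF in Hp. apply F3 in Hp. auto.
  + destruct (P HO) as [HA HF]. split.
    * constructor. apply F4 in HA; auto.
    * simpl; intros p Hp. apply HF, F3; auto.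
-
  destruct IHsub as [N P]. split; intro HO.
  + apply iN_allP in HO as [HO Ho]. destruct N as [HB HF].
    * apply P4; auto. { intro X; congruence. } apply N0; auto.
    * split; auto. intros p Hp. apply HF in Hp. apply P6 in Hp as [[? ?]|?].
      { congruence. } apply U; auto.
  + destruct (P HO) as [HA HF]. split.
    * constructor. apply P5 in HA; auto.
    * simpl; intros p Hp. apply HF, P7, U; auto.
-
  destruct IHsub as [N P]. split; intro HO.
  + destruct N as [HB HF].
    * apply F4; auto.
    * split; [constructor; auto|]. simpl; intros p Hp. apply HF in Hp. apply F3 in Hp. auto.
  + apply iP_allF in HO. destruct (P HO) as [HA HF]. split.
    * apply F4 in HA; auto.
    * simpl; intros p Hp. apply HF, F3; auto.
-
  destruct IHsub as [N P]. split; intro HO.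
  + destruct N as [HB HF].
    * apply R3; auto using Sinj.
    * split.
      { constructor; auto. destruct (occ 0 B) eqn:Eo; auto.
        assert (F : fv2 0 B (PV 0)) by (apply O; auto).
        apply HF in F. exfalso.
        destruct (R2c A S 0 _ ltac:(intros; lia) ltac:(auto) F) as [p' [Ep _]].
        destruct p'; discriminate. }
      simpl. intros p Hp. apply U in Hp. apply HF in Hp.
      destruct (R2c A S 0 _ ltac:(intros; lia) ltac:(auto) Hp) as [p' [Ep Hp']].
      apply upp_inj in Ep; subst; auto.
  + apply iP_allP in HO. destruct (P HO) as [HA HF]. split.
    * apply R3 in HA; auto using Sinj.
    * simpl; intros p Hp. apply U, HF. apply R2b; auto. intros; lia.
-
  destruct IHsub as [N P]. split; intro HO.
  + destruct (N HO) as [HB HF]. split.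
    * apply F4. apply F4 in HB; auto.
    * intros p Hp. apply HF, F3. apply F3 in Hp; auto.
  + apply F4 in HO. destruct P as [HA HF]. { apply F4; auto. } split; auto.
    intros p Hp. apply F3. apply HF in Hp. apply F3 in Hp; auto.
-
  destruct IHsub1 as [N1 P1], IHsub2 as [N2 P2]. split; intro HO.
  + destruct (N1 HO) as [HB HF]. destruct (N2 HB) as [HC HF']. split; auto.
  + destruct (P2 HO) as [HB HF]. destruct (P1 HB) as [HA HF']. split; auto.
-
  simpl in H. apply andb_true_iff in H as [H Hw]. apply andb_true_iff in H as [Ho Hp].
  split; intro HO.
  + exfalso. unfold unfoldMu in HO. apply F4 in HO.
    eapply (proj1 (Q D 0 _ _ ltac:(apply iN_mu) Ho)); eauto.
  + apply iP_mu in HO. unfold unfoldMu. split.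
    * apply F4. apply P4; auto.
      intros _. constructor.
      { apply F4; auto. }
      { rewrite F1; auto. }
      { destruct (F2 D (liftFc (length ts) (2 * length ts)) 0) as [E1 _]; rewrite E1; auto. }
    * intros p Hq. apply F3 in Hq. apply P6 in Hq as [[_ Hq]|Hq].
      { simpl in Hq. apply F3 in Hq. auto. }
      simpl. apply U; auto.
-
  simpl in H. apply andb_true_iff in H as [H Hw]. apply andb_true_iff in H as [Ho Hp].
  split; intro HO.
  + exfalso; eapply iN_mu; eauto.
  + unfold unfoldMu in *. apply F4 in HO. apply P5 in HO; auto. split.
    * constructor; auto.
    * simpl. intros p Hq. apply F3, P7, U; auto.
-
  simpl in H. apply andb_true_iff in H as [H Hw]. apply andb_true_iff in H as [Ho Hp].
  destruct IHsub as [_ P]. split; intro HO.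
  + exfalso; eapply iN_mu; eauto.
  + apply F4 in HO. destruct (P HO) as [HA HF]. apply P5 in HA; auto. split.
    * constructor; auto.
    * simpl. intros p Hq. apply F3, HF, P7, U; auto.
Qed.

Theorem theorem5p1 (E : term -> term -> Prop) (Tm Tp : ty) :
  wf Tm = true -> OmegaN Tm -> wf Tp = true -> OmegaP Tp ->
  (forall A, sub E Tm A -> OmegaN A /\ (forall p, Fv2 A p -> Fv2 Tm p)) /\
  (forall B, sub E B Tp -> OmegaP B /\ (forall p, Fv2 B p -> Fv2 Tp p)).
Proof.
  intros _ HN _ HP. split; intros X HX; apply M in HX as [N P]; auto.
Qed.
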